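(* For every integer $n\ge3$, the coefficient of the monomial $T_2T_n^2$ in $R_{n+1}$ is $c^{(n+1)}_{n,n,2}=-n(n+1)$.
   Context: Let $T_1,T_2,\dots$ be indeterminates, $T_\alpha=T_{\alpha_1}\cdots T_{\alpha_d}$. Define linear operators $L,H$ on monomials (constants sent to $0$): $L(T_{\alpha_1}\cdots T_{\alpha_r})=\sum_{1\le i<j\le r}T_{\alpha_1}\cdots T_{\alpha_i+1}\cdots T_{\alpha_j+1}\cdots T_{\alpha_r}$, $H(T_{\alpha_1}\cdots T_{\alpha_r})=-\frac12\sum_{k=1}^{r}\sum_{l=1}^{\alpha_k-1}\binom{\alpha_k}{l}T_{1+l}T_{1+\alpha_k-l}\prod_{i\ne k}T_{\alpha_i}$. For $n\ge2$ let $A_n=-\sum_{k=1}^{n-1}\binom{n}{k}T_{1+k}T_{1+n-k}T_n$; set $R_2=0$, $R_{n+1}=A_n+L(R_n)+H(R_n)$. $c^{(n)}_\alpha$ is the coefficient of the monomial $T_\alpha$ in $R_n$. *)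

(* Defs.v *)
(* Polynomials in the indeterminates T_1, T_2, ... with
   rational coefficients are represented as formal finite sums: a list of
   (coefficient, monomial) pairs, a monomial T_{a_1}...T_{a_r} being the
   sequence [:: a_1; ...; a_r]. Two monomials are equal iff their index
   sequences are permutations of each other; the coefficient of T_alpha in P
   is the sum of the coefficients of all terms whose monomial equals T_alpha. *)
From mathcomp Require Import all_boot all_order all_algebra.
Set Implicit Arguments. Unset Strict Implicit. Unset Printing Implicit Defensive.
Import Order.TTheory GRing.Theory Num.Theory.
Local Open Scope ring_scope.

Definition mono := seq nat.
Definition fpoly := seq (rat * mono).

Definition coef (P : fpoly) (alpha : mono) : rat :=
  \sum_(t <- P | perm_eq t.2 alpha) t.1.

Definition linext (f : mono -> fpoly) (P : fpoly) : fpoly :=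
  flatten [seq [seq (t.1 * u.1, u.2) | u <- f t.2] | t <- P].

Definition incr_at (m : mono) (i : nat) : mono := set_nth 0%N m i (nth 0%N m i).+1.

(* L on a monomial: sum over 1 <= i < j <= r (0-based i < j < r) *)
Definition L_mono (m : mono) : fpoly :=
  flatten [seq [seq (1, incr_at (incr_at m i) j) | j <- iota i.+1 (size m - i.+1)]
          | i <- iota 0 (size m)].

Definition H_mono (m : mono) : fpoly :=
  flatten [seq [seq (- (1/2) * ('C(nth 0%N m k, l))%:R,
                     (1 + l)%N :: (1 + nth 0%N m k - l)%N :: (take k m ++ drop k.+1 m))
               | l <- iota 1 (nth 0%N m k).-1]
          | k <- iota 0 (size m)].

Definition Lop := linext L_mono.
Definition Hop := linext H_mono.

Definition A (n : nat) : fpoly :=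
  [seq (- ('C(n, k))%:R, [:: (1 + k)%N; (1 + n - k)%N; n]) | k <- iota 1 n.-1].

(* R_2 = 0, R_{n+1} = A_n + L(R_n) + H(R_n); R_0, R_1 are unused (set to 0) *)
Fixpoint R (n : nat) : fpoly :=
  match n with
  | m.+1 => if (2 <= m)%N then A m ++ Lop (R m) ++ Hop (R m) else [::]
  | 0 => [::]
  end.

(* Main.v *)
Require Import Defs.
From mathcomp Require Import all_boot all_order all_algebra.
From mathcomp Require Import zify.
Import Order.TTheory GRing.Theory Num.Theory.
Local Open Scope ring_scope.

Lemma coefS P a : coef P a = \sum_(t <- P) t.1 * (perm_eq t.2 a)%:R.
Proof.
rewrite /coef big_mkcond; apply: eq_bigr => t _; case: perm_eq; by rewrite ?mulr1 ?mulr0.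
Qed.

Lemma coef_cat P Q a : coef (P ++ Q) a = coef P a + coef Q a.
Proof. by rewrite /coef big_cat. Qed.

Lemma coef_linext f P a : coef (linext f P) a = \sum_(t <- P) t.1 * coef (f t.2) a.
Proof.
rewrite /coef /linext big_flatten /= big_map; apply: eq_bigr => t _.
by rewrite big_map /= mulr_sumr.
Qed.

Lemma coef_size0 (Q : fpoly) a : all (fun u => size u.2 != size a) Q -> coef Q a = 0.
Proof.
move/allP=> H; rewrite /coef big1_seq // => t /andP [Hp Ht].
by have := H t Ht; rewrite (perm_size Hp) eqxx.
Qed.

Definition good3 (m : mono) := (3 <= size m)%N && all (leq 2) m.

Lemma mem_linext f P t : t \in linext f P ->
  exists2 s, s \in P & exists2 u, u \in f s.2 & t.2 = u.2.
Proof.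
case/flattenP => l /mapP [s Hs ->] /mapP [u Hu ->].
by exists s => //; exists u.
Qed.

Lemma all_incr m i : all (leq 2) m -> (i < size m)%N -> all (leq 2) (incr_at m i).
Proof.
move=> /(all_nthP 0%N) H Hi; apply/(all_nthP 0%N) => j.
rewrite /incr_at size_set_nth nth_set_nth /= => Hj.
have Hj' : (j < size m)%N by move: Hj; rewrite /maxn; case: ifP => //; lia.
case: eqP => _; last exact: H.
by have := H i Hi; lia.
Qed.

Lemma size_incr m i : (i < size m)%N -> size (incr_at m i) = size m.
Proof. by move=> Hi; rewrite /incr_at size_set_nth; lia. Qed.

Lemma L_mono_prop m u : all (leq 2) m -> u \in L_mono m ->
  size u.2 = size m /\ all (leq 2) u.2.
Proof.
move=> Hm /flattenP [l /mapP [i Hi ->] /mapP [j Hj ->]] /=.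
move: Hi Hj; rewrite !mem_iota => Hi Hj.
have Hi' : (i < size m)%N by lia.
have Hj' : (j < size (incr_at m i))%N by rewrite size_incr //; lia.
split; first by rewrite size_incr // size_incr.
by apply: all_incr => //; apply: all_incr.
Qed.

Lemma H_mono_prop m u : all (leq 2) m -> u \in H_mono m ->
  size u.2 = (size m).+1 /\ all (leq 2) u.2.
Proof.
move=> Hm /flattenP [l /mapP [k Hk ->] /mapP [j Hj ->]] /=.
move: Hk Hj; rewrite !mem_iota => Hk Hj.
have Hk' : (k < size m)%N by lia.
have Ha : (2 <= nth 0%N m k)%N by move/(all_nthP 0%N): Hm; apply.
split.
  rewrite size_cat size_take size_drop Hk'; lia.
rewrite /= all_cat; apply/and4P; split; try lia.
  by apply/allP => x /mem_take; move/allP: Hm; apply.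
by apply/allP => x /mem_drop; move/allP: Hm; apply.
Qed.

Lemma R_succ n : (2 <= n)%N -> R n.+1 = A n ++ Lop (R n) ++ Hop (R n).
Proof. by move=> H; rewrite /= H. Qed.

Lemma R_inv k t : t \in R k -> good3 t.2.
Proof.
elim: k t => [|k IH] t //=; case: ifP => // Hk.
rewrite !mem_cat => /or3P [Ht|Ht|Ht].
- move: Ht => /mapP [i]; rewrite mem_iota => Hi -> /=.
  rewrite /good3 /=; lia.
- case/mem_linext: Ht => s /IH /andP [Hs1 Hs2] [u Hu ->].
  have [E1 E2] := L_mono_prop _ _ Hs2 Hu; by rewrite /good3 E1 Hs1.
- case/mem_linext: Ht => s /IH /andP [Hs1 Hs2] [u Hu ->].
  have [E1 E2] := H_mono_prop _ _ Hs2 Hu; rewrite /good3 E1 E2 andbT; lia.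
Qed.

Lemma perm1 (z b : nat) : perm_eq [:: z] [:: b] -> z = b.
Proof. by move/perm_mem => H; have := H z; rewrite !inE eqxx => /esym/eqP. Qed.
Lemma perm2 (y z a b : nat) : perm_eq [:: y;z] [:: a;b] -> (y == a) && (z == b) || (y == b) && (z == a).
Proof.
move=> H; have: y \in [:: a; b] by rewrite -(perm_mem H) mem_head.
rewrite !inE => /orP [/eqP Ey|/eqP Ey]; subst y.
  by move: H; rewrite perm_cons => /perm1 ->; rewrite !eqxx.
have: perm_eq [:: b; z] [:: b; a].
  apply: (perm_trans H); apply/permP => P /=; lia.
by rewrite perm_cons => /perm1 ->; rewrite !eqxx orbT.
Qed.
Lemma perm3 (x y z p q r : nat) : perm_eq [:: x;y;z] [:: p;q;r] -> [|| [&& x==p,y==q&z==r], [&& x==p,y==r&z==q], [&& x==q,y==p&z==r], [&& x==q,y==r&z==p], [&& x==r,y==p&z==q]| [&& x==r,y==q&z==p]].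
Proof.
move=> H; have: x \in [:: p; q; r] by rewrite -(perm_mem H) mem_head.
rewrite !inE => /or3P [/eqP Ex|/eqP Ex|/eqP Ex]; subst x.
- by move: H; rewrite perm_cons => /perm2 /orP [] /andP [] /eqP -> /eqP ->; rewrite !eqxx ?orbT.
- have: perm_eq [:: q; y; z] [:: q; p; r].
    apply: (perm_trans H); apply/permP => P /=; lia.
  by rewrite perm_cons => /perm2 /orP [] /andP [] /eqP -> /eqP ->; rewrite !eqxx ?orbT.
- have: perm_eq [:: r; y; z] [:: r; p; q].
    apply: (perm_trans H); apply/permP => P /=; lia.
  by rewrite perm_cons => /perm2 /orP [] /andP [] /eqP -> /eqP ->; rewrite !eqxx ?orbT.
Qed.

Lemma perm3E (x y z p q r : nat) : perm_eq [:: x;y;z] [:: p;q;r] = [|| [&& x==p,y==q&z==r], [&& x==p,y==r&z==q], [&& x==q,y==p&z==r], [&& x==q,y==r&z==p], [&& x==r,y==p&z==q]| [&& x==r,y==q&z==p]].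
Proof.
apply/idP/idP; first exact: perm3.
move=> H; apply/permP => P.
repeat (case/orP: H => H; first by case/and3P: H => /eqP -> /eqP -> /eqP -> /=; lia).
by case/and3P: H => /eqP -> /eqP -> /eqP -> /=; lia.
Qed.

Lemma permK (x y z n : nat) : (3 <= n)%N -> perm_eq [:: x;y;z] [:: n;n;2%N] =
  [|| [&& x==n,y==n&z==2%N], [&& x==n,y==2%N&z==n] | [&& x==2%N,y==n&z==n]].
Proof. move=> Hn; rewrite perm3E.
(repeat (case: eqP => ? /=; subst); try done; lia).
Qed.


Lemma coef_L m n : (4 <= n)%N -> good3 m ->
  coef (L_mono m) [:: n; n; 2%N] = (perm_eq m [:: n.-1; n.-1; 2%N])%:R.
Proof.
move=> Hn /andP [Hs Ha].
have [k Ek] : exists k, n = k.+4 by exists (n-4)%N; lia.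
subst n; case E: (size m == 3%N).
  case: m Hs Ha E => [|a [|b [|c [|d m]]]] //= Hs Ha _.

  rewrite coefS /L_mono /=.
  rewrite !big_cons big_nil !mul1r addr0 -!natrD; congr (_%:R).
  move: Ha; rewrite /= !permK //=.
  move=> /and3P [Ha Hb Hc].
  rewrite !eqSS.
  (repeat (case: eqP => ? /=; subst); try done; lia).
rewrite coef_size0.
  have -> : perm_eq m [:: k.+3; k.+3; 2%N] = false.
    by apply/negbTE/negP => /perm_size /= E'; rewrite E' in E.
  by [].
apply/allP => u Hu; have [E1 _] := L_mono_prop _ _ Ha Hu; by rewrite E1 /= E.
Qed.

Lemma coef_A n : (3 <= n)%N -> coef (A n) [:: n; n; 2%N] = - (2 * n)%:R.
Proof.
move=> Hn; rewrite coefS /A big_map /=.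
have -> : iota 1 n.-1 = index_iota 1 n by rewrite /index_iota subn1.
rewrite big_ltn; last by lia.
rewrite (big_cat_nat (n:=n.-1)); try lia.
rewrite [X in _ + (_ + X)]big_ltn; last by lia.
rewrite [X in _ + (_ + (_ + X))]big_geq //.
rewrite [X in _ + (X + _)]big1_seq; last first.
  move=> i /andP [_]; rewrite mem_index_iota => Hi.
  have -> : perm_eq [:: (1 + i)%N; (1 + n - i)%N; n] [:: n; n; 2%N] = false.
    rewrite permK //; last by lia.
  by rewrite mulr0.
have -> : perm_eq [:: (1 + 1)%N; (1 + n - 1)%N; n] [:: n; n; 2%N].
  by rewrite permK //; apply/orP; right; apply/orP; right; lia.
have -> : perm_eq [:: (1 + n.-1)%N; (1 + n - n.-1)%N; n] [:: n; n; 2%N].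
  by rewrite permK //; apply/orP; right; apply/orP; left; lia.
rewrite bin1 -subn1 bin_sub; last by lia.
rewrite bin1 natrM /= !mulr1 add0r addr0 -opprD; congr (- _); by rewrite mulr_natl mulr2n.
lia.
Qed.

Lemma main_aux n : (3 <= n)%N -> coef (R n.+1) [:: n; n; 2%N] = - ((n * (n + 1))%N)%:R.
Proof.
elim: n => [//|n IH] Hn.
rewrite (R_succ n.+1); last by lia.
rewrite !coef_cat coef_A // /Lop /Hop !coef_linext.
rewrite [X in _ + (_ + X)]big1_seq; last first.
  move=> t /andP [_ Ht]; rewrite coef_size0 ?mulr0 //.
  apply/allP => u Hu; case/andP: (R_inv _ _ Ht) => Hs Ha.
  have [E1 _] := H_mono_prop _ _ Ha Hu; rewrite E1 /=; move: Hs; case: (size t.2) => [|[|[|k]]] //.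
have [E2|H3] : n = 2%N \/ (3 <= n)%N by lia.
  subst n.
  have -> : R 3 = [:: (- ('C(2, 1))%:R, [:: 2%N; 2%N; 2%N])] by [].
  rewrite big_cons big_nil coefS /L_mono /= !big_cons big_nil.
  rewrite /incr_at /=.
  rewrite bin1; apply/eqP; vm_compute; reflexivity.

have -> : \sum_(t <- R n.+1) t.1 * coef (L_mono t.2) [:: n.+1; n.+1; 2%N] = coef (R n.+1) [:: n; n; 2%N].
  rewrite coefS; apply: eq_big_seq => t Ht; rewrite coef_L //; exact: R_inv _ _ Ht.
rewrite IH // addr0 -opprD -natrD.
by congr (- (_%:R)); nia.
Qed.

Theorem mainTheorem13 (n : nat) : (3 <= n)%N ->
  coef (R n.+1) [:: n; n; 2%N] = - ((n * (n + 1))%N)%:R.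
Proof. exact: main_aux. Qed.
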